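(* Let $\mathcal{T} = \{T_1, \ldots, T_t\}$ be a set of unrooted binary phylogenetic trees on a common leaf set $X$ with $n = |X|$, and let $\mathcal{Q}$ be the set of quartets that are incompatible quartets of $T_1$ and $T_i$ for some $2 \le i \le t$. Then there is a feasible solution $\tilde x$ of the linear program $$\text{minimize } \sum_{e \in E(T_1)} x_e \quad \text{s.t. } \sum_{e \in L(Q)} x_e \ge 1 \ \ \forall Q \in \mathcal{Q}, \qquad x_e \ge 0\ \ \forall e \in E(T_1)$$ with $\sum_{e \in E(T_1)} \tilde x_e = n/4$.
   Context: A (binary) phylogenetic tree on a finite set $X$ is an unrooted tree whose internal vertices have degree 3 and whose leaves are bijectively labelled by $X$. Two phylogenetic trees on $X$ are isomorphic ($\cong$) if there is a graph isomorphism between them fixing every leaf label. For $Y \subseteq X$, $T[Y]$ is the minimal subtree of $T$ connecting the leaves in $Y$, and $T|_Y$ is obtained from $T[Y]$ by suppressing all degree-2 vertices. A quartet is a 4-element subset of $X$; for $Q=\{a,b,c,d\}$, $ab|cd$ is the tree on $Q$ where $a,b$ share a neighbour $u$, $c,d$ share a neighbour $v$, and $u,v$ are adjacent. If $T_1|_Q \cong ab|cd$, $L(Q)$ is the set of edges of $T_1[\{a,b\}] \cup T_1[\{c,d\}]$. $Q$ is an incompatible quartet of $T_1,T_i$ if $T_1|_Q \not\cong T_i|_Q$. *)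

(* Defs.v *)
From HB Require Import structures.
From mathcomp Require Import all_boot all_order all_algebra.
From mathcomp Require Import boolp.
Set Implicit Arguments. Unset Strict Implicit. Unset Printing Implicit Defensive.

(* A tree is a finite simple graph (symmetric, irreflexive adjacency) that is
   connected and has no cycle. *)
Record ptree (X : finType) := PTree {
  pV : finType;
  padj : rel pV;
  padj_sym : symmetric padj;
  padj_irr : irreflexive padj;
  pconn : forall u v : pV, exists s, path padj u s /\ last u s = v;
  pacyc : forall (u : pV) (s : seq pV),
      uniq (u :: s) -> 1 < size s -> path padj u s -> ~~ padj (last u s) u;
  plab : X -> pV;
  plab_inj : injective plab;
  pleaf : forall v : pV, (v \in codom plab) = (#|[set w | padj v w]| <= 1);
  pint : forall v : pV, 1 < #|[set w | padj v w]| -> #|[set w | padj v w]| = 3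
}.

Section Trees.
Variable X : finType.
Variable PT : ptree X.
Local Notation V := (pV PT).
Local Notation adj := (@padj _ PT).

Definition Edges : {set {set V}} :=
  [set e : {set V} | [exists u, exists v, adj u v && (e == [set u; v])]].

Definition spath (y y' : V) (s : seq V) : Prop :=
  path adj y s /\ last y s = y' /\ uniq (y :: s).

(* vertices and edges of the minimal subtree T[Y]: union of the paths
   between leaves labelled in Y *)
Definition subtree_vertex (Y : {set X}) (w : V) : Prop :=
  exists y y' s, [/\ y \in Y, y' \in Y, spath (plab PT y) (plab PT y') s
                    & w \in plab PT y :: s].

Definition subtree_edge (Y : {set X}) (e : {set V}) : Prop :=
  exists y y' s s1 u v s2,
    [/\ y \in Y, y' \in Y, spath (plab PT y) (plab PT y') s,
        plab PT y :: s = s1 ++ u :: v :: s2 & e = [set u; v]].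

Definition Vsub (Y : {set X}) : {set V} := [set w | `[< subtree_vertex Y w >]].
Definition Esub (Y : {set X}) : {set {set V}} := [set e | `[< subtree_edge Y e >]].

Definition degsub (Y : {set X}) (w : V) : nat :=
  #|[set z | [set w; z] \in Esub Y]|.

(* T|_Y : vertices of T[Y] not of degree 2; two of them are adjacent iff
   they are joined by a path of T[Y] all of whose interior vertices have
   degree 2 in T[Y] (i.e. suppression of degree-2 vertices). *)
Definition RVert (Y : {set X}) : {set V} :=
  [set w in Vsub Y | degsub Y w != 2].

Definition Radj (Y : {set X}) : rel V := fun u v =>
  [&& u \in RVert Y, v \in RVert Y, u != v &
   `[< exists s, [/\ path (fun a b => [set a; b] \in Esub Y) u s,
                     last u s = v, uniq (u :: s) &
                     all (fun z => (z == v) || (degsub Y z == 2)) s] >] ].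

End Trees.

Record lgraph (X : finType) := LGraph {
  lgV : finType;
  lgS : {set lgV};
  lge : rel lgV;            (* adjacency (relevant on lgS) *)
  lglab : X -> lgV
}.

Definition restr (X : finType) (T : ptree X) (Y : {set X}) : lgraph X :=
  @LGraph X (pV T) (@RVert X T Y) (@Radj X T Y) (@plab X T).

Definition lg_iso (X : finType) (G1 G2 : lgraph X) (Y : {set X}) : Prop :=
  exists f : lgV G1 -> lgV G2,
    [/\ {in lgS G1 &, injective f},
        f @: lgS G1 = lgS G2,
        {in lgS G1 &, forall u v, @lge X G2 (f u) (f v) = @lge X G1 u v}
      & forall x, x \in Y -> f (@lglab X G1 x) = @lglab X G2 x].

(* the quartet tree ab|cd: a,b adjacent to u (= inr false),
   c,d adjacent to v (= inr true), u adjacent to v *)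
Definition qadj (X : finType) (a b c d : X) : rel (X + bool)%type :=
  fun p q => match p, q with
  | inl x, inr false => (x == a) || (x == b)
  | inl x, inr true => (x == c) || (x == d)
  | inr false, inl x => (x == a) || (x == b)
  | inr true, inl x => (x == c) || (x == d)
  | inr b1, inr b2 => b1 != b2
  | inl _, inl _ => false
  end.

Definition qtree (X : finType) (a b c d : X) : lgraph X :=
  @LGraph X (X + bool)%type
    [set inl a; inl b; inl c; inl d; inr false; inr true]
    (qadj a b c d) inl.

Definition incompatible (X : finType) (T1 Ti : ptree X) (Q : {set X}) : Prop :=
  ~ lg_iso (restr T1 Q) (restr Ti Q) Q.

Definition LQ (X : finType) (T1 : ptree X) (a b c d : X) : {set {set pV T1}} :=
  @Esub X T1 [set a; b] :|: @Esub X T1 [set c; d].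

(* Main.v *)
Require Import Defs.
From HB Require Import structures.
From mathcomp Require Import all_boot all_order all_algebra.
From mathcomp Require Import boolp.
Import Order.TTheory GRing.Theory Num.Theory.

Section H.
Variable X : finType.
Variable PT : ptree X.
Local Notation V := (pV PT).
Local Notation adj := (@padj _ PT).

Lemma exists_spath (u v : V) : exists s, spath u v s.
Proof.
have [s [ps ls]] := pconn u v.
case: (shortenP ps) ls => s' ps' us' _ ls'.
by exists s'; split.
Qed.

Lemma adj_neq u v : adj u v -> u != v.
Proof. by apply: contraTneq => ->; rewrite padj_irr. Qed.

Lemma card_edges_at (v : V) :
  #|[set e in Edges PT | v \in e]| = #|[set w | adj v w]|.
Proof.
have -> : [set e in Edges PT | v \in e] = (fun w => [set v; w]) @: [set w | adj v w].
  apply/setP => e; rewrite !inE; apply/andP/imsetP.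
    case=> /existsP [a /existsP [b /andP [ab /eqP ->]]].
    rewrite !inE => /orP [] /eqP E; subst v.
      by exists b; rewrite ?inE.
    by exists a; rewrite ?inE 1?padj_sym // setUC.
  case=> w; rewrite inE => vw ->; split; last by rewrite !inE eqxx.
  by apply/existsP; exists v; apply/existsP; exists w; rewrite vw eqxx.
apply: card_in_imset => w1 w2; rewrite !inE => h1 h2 E.
have : w1 \in [set v; w2] by rewrite -E !inE eqxx orbT.
rewrite !inE => /orP [/eqP e|/eqP //].
by move: h1; rewrite e padj_irr.
Qed.

Lemma leaf_deg (y : X) : #|X| != 1%N -> #|[set w | adj (plab PT y) w]| = 1%N.
Proof.
move=> nX.
have le1 : #|[set w | adj (plab PT y) w]| <= 1.
  by rewrite -pleaf codom_f.
have [y' ny'] : exists y', y' != y.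
  apply/existsP; move: nX; apply: contraR; rewrite negb_exists => /forallP H.
  rewrite -(card1 y); apply/eqP; apply: eq_card => z; rewrite !inE.
  by move: (H z); rewrite negbK.
have [s [ps ls]] := pconn (plab PT y) (plab PT y').
case: s ps ls => [|w s] /=.
  by move=> _ /plab_inj e; move: ny'; rewrite e eqxx.
case/andP => aw _ _.
apply/eqP; rewrite eqn_leq le1 /= card_gt0; apply/set0Pn; exists w; by rewrite inE.
Qed.

Lemma exch (A : {set {set V}}) (B : {set X}) :
  (\sum_(e in A) #|[set y in B | plab PT y \in e]|)%N =
  (\sum_(y in B) #|[set e in A | plab PT y \in e]|)%N.
Proof.
under eq_bigr => e _ do rewrite -sum1dep_card.
under [RHS]eq_bigr => y _ do rewrite -sum1dep_card.
rewrite (exchange_big_dep (mem B)) /=; last by move=> i j _ /andP [].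
apply: eq_bigr => y yB; apply: eq_bigl => e; by rewrite yB.
Qed.

Lemma edge_at (a b : X) : a != b -> exists2 e, e \in Esub PT [set a; b] & plab PT a \in e.
Proof.
move=> ab.
have [s sp] := exists_spath (plab PT a) (plab PT b).
case: s sp => [|w s] sp.
  by case: sp => _ [/= /plab_inj e _]; move: ab; rewrite e eqxx.
exists [set plab PT a; w]; last by rewrite !inE eqxx.
rewrite inE; apply/asboolP.
exists a, b, (w :: s), [::], (plab PT a), w, s; split => //; by rewrite !inE eqxx ?orbT.
Qed.
End H.

Lemma uniq4 (X : finType) (a b c d : X) :
  #|[set a; b; c; d]| = 4%N -> uniq [:: a; b; c; d].
Proof.
move=> H; apply/card_uniqP; rewrite [size _]/= -H; apply/eq_card => z.
by rewrite !inE !orbA.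
Qed.

Local Open Scope ring_scope.

Theorem lemma7 (R : realFieldType) (X : finType) (t : nat)
    (T : 'I_t.+1 -> ptree X) :
  #|X| != 1%N ->
  exists x : {set pV (T ord0)} -> R,
    [/\ (forall e, e \in Edges (T ord0) -> 0 <= x e),
        (forall Q : {set X},
           #|Q| = 4%N ->
           (exists i : 'I_t.+1, i != ord0 /\ incompatible (T ord0) (T i) Q) ->
           forall a b c d : X,
             Q = [set a; b; c; d] ->
             lg_iso (restr (T ord0) Q) (qtree a b c d) Q ->
             1 <= \sum_(e in LQ (T ord0) a b c d) x e)
      & \sum_(e in Edges (T ord0)) x e = #|X|%:R / 4].
Proof.
move=> nX; set PT := T ord0.
exists (fun e : {set pV PT} => (#|[set y | plab PT y \in e]|)%:R / 4); split.
- by move=> e _; rewrite divr_ge0 // ler0n.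
- move=> Q HQ _ a b c d EQ _.
  have := @uniq4 _ a b c d ltac:(by rewrite -EQ).
  rewrite /= !inE !negb_or => /and4P [/and3P [ab ac ad] /andP [bc bd] cd _].
  rewrite -mulr_suml -natr_sum ler_pdivlMr // mul1r ler_nat.
  apply: (@leq_trans (\sum_(e in LQ PT a b c d) #|[set y in Q | plab PT y \in e]|)).
    rewrite exch -{1}HQ -sum1_card; apply: leq_sum => y yQ.
    rewrite card_gt0; apply/set0Pn.
    move: yQ; rewrite EQ !inE -!orbA => /or4P [] /eqP ->.
    + have [e e1 e2] := @edge_at _ PT _ _ ab.
      by exists e; rewrite inE /LQ in_setU e1 e2.
    + have ba : b != a by rewrite eq_sym.
      have [e e1 e2] := @edge_at _ PT _ _ ba.
      by rewrite setUC in e1; exists e; rewrite inE /LQ in_setU e1 e2.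
    + have [e e1 e2] := @edge_at _ PT _ _ cd.
      by exists e; rewrite inE /LQ in_setU e1 e2 orbT.
    + have dc : d != c by rewrite eq_sym.
      have [e e1 e2] := @edge_at _ PT _ _ dc.
      by rewrite setUC in e1; exists e; rewrite inE /LQ in_setU e1 e2 orbT.
  apply: leq_sum => e _; apply: subset_leq_card; apply/subsetP => y.
  by rewrite !inE => /andP [].
- rewrite -mulr_suml -natr_sum; congr (_%:R / 4).
  have E : forall e : {set pV PT}, [set y | plab PT y \in e] = [set y in [set: X] | plab PT y \in e].
    by move=> e; apply/setP => y; rewrite !inE.
  under eq_bigr => e _ do rewrite E.
  rewrite exch -cardsT -sum1_card; apply: eq_bigr => y _.
  by rewrite card_edges_at leaf_deg.
Qed.
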